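(* Let $k\ge 2$ and let $f\in\mathcal{GB}_n^{2^k}$ be given by $f(\mathbf{x})=g(\mathbf{x})+2h(\mathbf{x})$ with $g\in\mathcal{B}_n$ and $h\in\mathcal{GB}_n^{2^{k-1}}$. Consider the statements (i) $f$ is gbent in $\mathcal{GB}_n^{2^k}$; (ii) $h$ and $h+2^{k-2}g$ are both gbent in $\mathcal{GB}_n^{2^{k-1}}$, and $\Im\big(\overline{\mathcal{H}^{(2^{k-1})}_h(\mathbf{u})}\,\mathcal{H}^{(2^{k-1})}_{h+2^{k-2}g}(\mathbf{u})\big)=0$ for all $\mathbf{u}\in\mathbb{F}_2^n$. If $n$ is even, (i) and (ii) are equivalent. If $n$ is odd, (ii) implies (i).
   Context: $\mathcal{B}_n$: Boolean functions $\mathbb{F}_2^n\to\mathbb{F}_2$; $\mathcal{GB}_n^q$: functions $\mathbb{F}_2^n\to\mathbb{Z}_q$ (Boolean values viewed as integers; $g+2h$ computed in $\mathbb{Z}_{2^k}$, $h+2^{k-2}g$ in $\mathbb{Z}_{2^{k-1}}$). $\mathcal{H}^{(q)}_f(\mathbf{u})=\sum_{\mathbf{x}\in\mathbb{F}_2^n}\zeta_q^{f(\mathbf{x})}(-1)^{\mathbf{u}\cdot\mathbf{x}}$ with $\zeta_q=e^{2\pi i/q}$ (for $q=2$ this is the ordinary Walsh–Hadamard transform); $f\in\mathcal{GB}_n^q$ is gbent if $|\mathcal{H}^{(q)}_f(\mathbf{u})|=2^{n/2}$ for all $\mathbf{u}$ (for $q=2$: bent). $\Im(z)$ is the imaginary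 part and $\bar z$ the complex conjugate. *)

(* Defs.v *)
From HB Require Import structures.
From mathcomp Require Import all_boot all_order all_algebra all_field.
Set Implicit Arguments. Unset Strict Implicit. Unset Printing Implicit Defensive.
Import Order.TTheory GRing.Theory Num.Theory.
Local Open Scope ring_scope.

Definition BV (n : nat) := {ffun 'I_n -> bool}.

Definition dotF2 n (u x : BV n) : bool := odd (\sum_(i < n) (u i && x i))%N.

(* zeta_q = e^{2 pi i / q} for even q: (q/2).-root (-1) is e^{i pi/(q/2)}
   (n.-root picks the root of minimal nonnegative argument). Only used for
   q = 2^m with m >= 1. *)
Definition zeta (q : nat) : algC := (q./2).-root (-1).

Definition WH n q (f : BV n -> 'I_q) (u : BV n) : algC :=
  \sum_(x : BV n) zeta q ^+ (f x) * (-1) ^+ (dotF2 u x).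

Definition gbent n q (f : BV n -> 'I_q) : Prop :=
  forall u : BV n, `|WH f u| = sqrtC (2%:R ^+ n).

(* Main.v *)
Require Import Defs.
From HB Require Import structures.
From mathcomp Require Import all_boot all_order all_algebra all_field.
From mathcomp Require Import ring zify.
Import Order.TTheory GRing.Theory Num.Theory.
Local Open Scope ring_scope.

Lemma zeta_eq m : zeta (2 ^ m.+1) = (2 ^ m).-root (-1).
Proof. by rewrite /zeta expnS mul2n doubleK. Qed.

Lemma ReIm_sq (x : algC) : 'Re (x ^+ 2) = 'Re x ^+ 2 - 'Im x ^+ 2 /\ 'Im (x ^+ 2) = 2 * 'Re x * 'Im x.
Proof.
have RR := Creal_Re x; have RI := Creal_Im x.
have := mulC_rect ('Re x) ('Im x) ('Re x) ('Im x); rewrite -Crect -expr2 => ->.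
rewrite Re_rect ?Im_rect ?rpredD ?rpredN ?rpredM //.
split; first by rewrite !expr2.
by rewrite -mulrA mulr_natl mulr2n.
Qed.

Lemma norm1_Re (x : algC) : `|x| = 1 -> 'Re (x ^+ 2) = 2 * 'Re x ^+ 2 - 1.
Proof.
move=> nx; have := normC2_Re_Im x; rewrite nx expr1n => E.
have [-> _] := ReIm_sq x.
have -> : 'Im x ^+ 2 = 1 - 'Re x ^+ 2 by rewrite E addrC addKr.
by rewrite opprB addrA -mulr2n mulr_natl.
Qed.

Lemma root_sq m : (0 < m)%N -> ((m.*2).-root (-1 : algC)) ^+ 2 = m.-root (-1).
Proof.
move=> m0; case: (ltngtP m 1) => [|m1|->]; first by case: m m0.
2: by rewrite root1C rootCK.
set z := _.-root _; set w := m.-root _.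
have m20 : (0 < m.*2)%N by rewrite double_gt0.
have zn : z ^+ m.*2 = -1 by rewrite rootCK.
have wn : w ^+ m = -1 by rewrite rootCK.
have n1 : forall y : algC, forall p, (0 < p)%N -> y ^+ p = -1 -> `|y| = 1.
  move=> y p p0 yp; apply/eqP; rewrite -(pexpr_eq1 (n:=p)) ?normr_ge0 //.
  by rewrite -normrX yp normrN normr1.
have nz := n1 _ _ m20 zn; have nw := n1 _ _ m0 wn.
have Imz : 0 <= 'Im z by apply: Im_rootC_ge0; rewrite -addnn; move: m1; clear; case: m => [|[|]].
have Imw : 0 <= 'Im w by apply: Im_rootC_ge0.
set s := sqrtC w.
have s2 : s ^+ 2 = w by apply: sqrtCK.
have Ims : 0 <= 'Im s by apply: Im_rootC_ge0.
have sn : s ^+ m.*2 = -1 by rewrite -mul2n exprM s2.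
have ns := n1 _ _ m20 sn.
have Res : 'Re s <= 'Re z by apply: rootC_Re_max.
have Res0 : 0 <= 'Re s.
  have [_ Iw] := ReIm_sq s; rewrite s2 in Iw.
  have [Is0|Isp] := eqVneq ('Im s) 0.
    have sr : s \is Num.real by apply/Creal_ImP.
    have : 0 <= w ^+ m.
      by rewrite -s2 -exprM real_exprn_even_ge0 // oddM /=.
    by rewrite wn oppr_ge0 ler10.
  have Isp' : 0 < 'Im s by rewrite lt_def Isp Ims.
  by rewrite -(pmulr_lge0 _ Isp') -(pmulr_rge0 _ (ltr0Sn _ 1)) mulrA -Iw.
have Rez0 : 0 <= 'Re z := le_trans Res0 Res.
have [Rz2 Iz2] := ReIm_sq z.
have Imz2 : 0 <= 'Im (z ^+ 2) by rewrite Iz2 !mulr_ge0.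
have le1 : 'Re (z ^+ 2) <= 'Re w.
  by apply: rootC_Re_max => //; rewrite -exprM mul2n.
have le2 : 'Re w <= 'Re (z ^+ 2).
  rewrite -s2 !norm1_Re // lerD2r ler_pM2l ?ltr0Sn //.
  by rewrite !expr2 ler_pM.
have ER : 'Re (z ^+ 2) = 'Re w by apply/le_anti; rewrite le1 le2.
have EI : 'Im (z ^+ 2) = 'Im w.
  apply/eqP; rewrite -(eqrXn2 (n:=2)) //; apply/eqP.
  have := normC2_Re_Im (z ^+ 2); have := normC2_Re_Im w.
  rewrite normrX nz nw !expr1n ER => ->; by move/addrI.
by rewrite [z ^+ 2]Crect [w]Crect ER EI.
Qed.

Section Cyc.
Variable j : nat.
Definition NN := (2 ^ j.+1)%N.
Definition zz := zeta (2 ^ j.+2).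
Definition ww := zeta (2 ^ j.+1).

Lemma NN_gt0 : (0 < NN)%N. Proof. by rewrite expn_gt0. Qed.

Lemma zzN : zz ^+ NN = -1.
Proof. by rewrite /zz zeta_eq rootCK // expn_gt0. Qed.

Lemma zz2N : zz ^+ (NN * 2) = 1.
Proof. by rewrite exprM zzN expr2 mulrNN mulr1. Qed.

Lemma wwN : ww ^+ (2 ^ j) = -1.
Proof. by rewrite /ww zeta_eq rootCK // expn_gt0. Qed.

Lemma norm_zz : `|zz| = 1.
Proof.
have : `|zz| ^+ NN = 1 by rewrite -normrX zzN normrN normr1.
by move/eqP; rewrite pexpr_eq1 ?normr_ge0 ?NN_gt0 // => /eqP.
Qed.

Lemma ww_zz : ww = zz ^+ 2.
Proof. by rewrite /ww /zz !zeta_eq expnS mul2n root_sq // expn_gt0. Qed.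

Lemma m1_neq1 : (-1 : algC) != 1.
Proof. by rewrite -subr_eq0 -opprD oppr_eq0 -(natrD _ 1 1) pnatr_eq0. Qed.

Lemma zz_prim : (NN * 2).-primitive_root zz.
Proof.
have [|m pm] := @prim_order_exists _ (NN * 2) zz _ zz2N; first by rewrite muln_gt0 NN_gt0.
rewrite /NN -expnSr => /(@dvdn_pfactor 2 m _ isT)[e le_e em].
suff -> : (2 ^ j.+2 = m)%N by [].
rewrite em; move: le_e; rewrite leq_eqVlt => /orP[/eqP-> //|].
rewrite ltnS => le_e; have := prim_expr_order pm.
move/expr_dvd => /(_ NN); rewrite em /NN dvdn_exp2l // => /(_ isT); rewrite -/NN zzN => /eqP.
by rewrite (negbTE m1_neq1).
Qed.

Definition vec (c : nat -> int) : algC := \sum_(i < NN) zz ^+ i *~ c i.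

Lemma vec_indep c : vec c = 0 -> forall i, (i < NN)%N -> c i = 0.
Proof.
move=> v0; pose p : {poly rat} := \poly_(i < NN) (c i)%:~R.
have [p0 [Dp0 _] dvd] := minCpolyP zz.
have sz0 : size p0 = NN.+1.
  rewrite -(size_map_poly (ratr : {rmorphism rat -> algC})) -Dp0 (minCpoly_cyclotomic zz_prim) size_cyclotomic.
  by rewrite /NN -expnSr totient_pfactor // mul1n.
have rp : root (map_poly ratr p) zz.
  apply/eqP; rewrite (horner_coef_wide _ (n := NN)); last by rewrite size_map_poly size_poly.
  rewrite -[RHS]v0 /vec; apply: eq_bigr => i _.
  by rewrite coef_map coef_poly ltn_ord /= ratr_int mulrzl.
have p_eq0 : p = 0.
  apply/eqP; apply: contraT => pn0; rewrite dvd in rp.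
  have := dvdp_leq pn0 rp; rewrite sz0 => /leq_trans/(_ (size_poly _ _)).
  by rewrite ltnn.
move=> i lti; have := congr1 (fun q : {poly rat} => q`_i) p_eq0.
by rewrite /= coef_poly lti coef0 => /eqP; rewrite intr_eq0 => /eqP.
Qed.

Definition Rp (P : pred nat) (x : algC) :=
  exists c : nat -> int, (forall i, ~~ P i -> c i = 0) /\ x = vec c.
Definition RR := Rp predT.

Lemma Rp0 P : Rp P 0.
Proof. by exists (fun _ => 0); split => //; rewrite /vec big1 // => i _; rewrite mulr0z. Qed.

Lemma RpD P x y : Rp P x -> Rp P y -> Rp P (x + y).
Proof.
move=> [c [Pc ->]] [d [Pd ->]]; exists (fun i => c i + d i); split.
  by move=> i Pi; rewrite Pc ?Pd.
by rewrite /vec -big_split; apply: eq_bigr => i _; rewrite mulrzDr.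
Qed.

Lemma RpN P x : Rp P x -> Rp P (- x).
Proof.
move=> [c [Pc ->]]; exists (fun i => - c i); split.
  by move=> i Pi; rewrite Pc.
by rewrite /vec -sumrN; apply: eq_bigr => i _; rewrite mulrNz.
Qed.

Lemma RpB P x y : Rp P x -> Rp P y -> Rp P (x - y).
Proof. by move=> ? ?; apply: RpD => //; apply: RpN. Qed.

Lemma RpMz P x m : Rp P x -> Rp P (x *~ m).
Proof.
move=> [c [Pc ->]]; exists (fun i => c i * m); split.
  by move=> i Pi; rewrite (Pc i Pi) mul0r.
by rewrite /vec mulrz_suml; apply: eq_bigr => i _; rewrite mulrzA.
Qed.

Lemma Rp_sum P (I : Type) (r : seq I) (Q : pred I) (F : I -> algC) :
  (forall i, Q i -> Rp P (F i)) -> Rp P (\sum_(i <- r | Q i) F i).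
Proof. by move=> H; apply: big_ind => //; [apply: Rp0 | apply: RpD]. Qed.

Lemma zz_exp m : zz ^+ m = zz ^+ (m %% NN) *~ ((-1) ^+ (m %/ NN)).
Proof.
rewrite {1}(divn_eq m NN) exprD mulnC exprM zzN mulrC -mulrzr.
by rewrite rmorphXn /= rmorphN1.
Qed.

Lemma Rp_zz (P : pred nat) m : P (m %% NN)%N -> Rp P (zz ^+ m).
Proof.
move=> Pm; exists (fun i => if i == (m %% NN)%N then (-1) ^+ (m %/ NN) else 0).
split; first by move=> i; case: eqP => // -> /negP.
rewrite /vec (bigD1 (Ordinal (ltn_pmod m NN_gt0))) //= eqxx big1 ?addr0 -?zz_exp //.
by move=> i /negbTE; rewrite -val_eqE /= => ->; rewrite mulr0z.
Qed.

Lemma RR_zz m : RR (zz ^+ m). Proof. exact: Rp_zz. Qed.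

Lemma RR_int m : RR (m%:~R).
Proof. by rewrite -[m%:~R]mulrzl mulr1 -(expr0 zz); apply: RpMz; apply: RR_zz. Qed.

Lemma RRM x y : RR x -> RR y -> RR (x * y).
Proof.
move=> [c [_ ->]] [d [_ ->]]; rewrite /vec mulr_suml; apply: Rp_sum => i _.
rewrite mulr_sumr; apply: Rp_sum => l _.
by rewrite mulrzAl mulrzAr -exprD; apply: RpMz; apply: RpMz; apply: RR_zz.
Qed.

Lemma zz_neq0 : zz != 0.
Proof. by rewrite -normr_eq0 norm_zz oner_eq0. Qed.

Lemma zz_conj : zz^* = zz ^+ (NN * 2).-1.
Proof.
apply: (mulfI zz_neq0); rewrite -exprS prednK ?muln_gt0 ?NN_gt0 // zz2N.
by rewrite -normCK norm_zz expr1n.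
Qed.

Lemma RR_conj x : RR x -> RR (x^*).
Proof.
move=> [c [_ ->]]; rewrite /vec rmorph_sum; apply: Rp_sum => i _.
by rewrite rmorphMz rmorphXn /= zz_conj -exprM; apply: RpMz; apply: RR_zz.
Qed.

Definition pi := 1 - zz.
Definition dvdR a x := exists r, RR r /\ x = a * r.

Lemma RR_nat m : RR m%:R.
Proof. by rewrite pmulrn; apply: RR_int. Qed.

Lemma RR1 : RR 1. Proof. by rewrite -(expr0 zz); apply: RR_zz. Qed.

Lemma RRX x m : RR x -> RR (x ^+ m).
Proof. by move=> Rx; elim: m => [|m IH]; [apply: RR1 | rewrite exprS; apply: RRM]. Qed.

Lemma RRpi : RR pi. Proof. by apply: RpB; [apply: RR1 | rewrite -(expr1 zz); apply: RR_zz]. Qed.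

Lemma geoR m x : RR x -> dvdR (1 - x) (1 - x ^+ m).
Proof.
move=> Rx; exists (\sum_(i < m) x ^+ i); split.
  by apply: Rp_sum => i _; apply: RRX.
by rewrite -opprB subrX1 -mulNr opprB.
Qed.

Lemma two_dvd_pre e : (e <= j.+1)%N -> dvdR (pi ^+ (2 ^ e)) (1 - zz ^+ (2 ^ e)).
Proof.
elim: e => [_|e IH le]; first by exists 1; split; [apply: RR1 | rewrite expn0 !expr1 mulr1].
have [r1 [R1 E1]] := IH (ltnW le).
have [r2 [R2 E2]] := @geoR (2 ^ (j.+1 - e)).+1 _ (RR_zz (2 ^ e)).
have E3 : 1 + zz ^+ (2 ^ e) = 1 - (zz ^+ (2 ^ e)) ^+ (2 ^ (j.+1 - e)).+1.
  rewrite -exprM mulnS -expnD subnKC ?(ltnW le) // exprD zzN mulrN1 opprK //.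
exists (r1 ^+ 2 * r2); split; first by apply: RRM; [apply: RRX | ].
rewrite expnS mul2n -addnn !exprD.
have -> : 1 - zz ^+ (2 ^ e) * zz ^+ (2 ^ e) = (1 - zz ^+ (2 ^ e)) * (1 + zz ^+ (2 ^ e)) by ring.
rewrite E3 E2 E1; ring.
Qed.

Lemma two_dvd : exists s, RR s /\ 2 = pi ^+ NN * s.
Proof.
have [s [Rs E]] := @two_dvd_pre j.+1 (leqnn _); exists s; split => //.
by rewrite -E zzN opprK.
Qed.

Lemma pi_pow2 e : (0 < e)%N -> exists q, RR q /\ pi ^+ (2 ^ e) = 1 + zz ^+ (2 ^ e) + 2 * q.
Proof.
case: e => // e _; elim: e => [|e [q [Rq E]]].
  exists (- zz); split; first by apply: RpN; rewrite -(expr1 zz); apply: RR_zz.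
  by rewrite /pi !expr2; ring.
exists (zz ^+ (2 ^ e.+1) + 2 * (1 + zz ^+ (2 ^ e.+1)) * q + 2 * q ^+ 2); split.
  have R2 : RR 2 by rewrite pmulrn; apply: RR_int.
  apply: RpD; first apply: RpD; first exact: RR_zz.
    apply: RRM => //; apply: RRM => //; apply: RpD; [exact: RR1 | exact: RR_zz].
  by apply: RRM => //; apply: RRX.
rewrite (expnS 2 e.+1) mul2n -addnn !exprD E.
by ring.
Qed.

Lemma piN_dvd : exists q, RR q /\ pi ^+ NN = 2 * q.
Proof.
have [q [Rq E]] := @pi_pow2 j.+1 (ltn0Sn j); exists q; split => //.
by rewrite /NN E -/NN zzN addrN add0r.
Qed.

Lemma RR_Aint x : RR x -> x \in Aint.
Proof.
move=> [c [_ ->]]; apply: rpred_sum => i _; apply: rpredMz; apply: rpredX.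
exact: Aint_prim_root zz_prim.
Qed.

Lemma pi_nunit : ~ dvdR pi 1.
Proof.
move=> [r [Rr E]].
have [q [Rq Eq]] := piN_dvd.
have E2 : 1 = 2 * (q * r ^+ NN) by rewrite mulrA -Eq -exprMn -E expr1n.
have : (2 : algC)^-1 \in Num.int.
  apply: Cint_rat_Aint; first by rewrite rpredV rpred_nat.
  have -> : (2 : algC)^-1 = q * r ^+ NN.
    have n2 : (2:algC) != 0 by rewrite pnatr_eq0.
    by rewrite -[q * _](mulKf n2) -E2 mulr1.
  by apply: RR_Aint; apply: RRM => //; apply: RRX.
move/intrP => [m Em].
have E3 : ((m * 2)%:~R : algC) = (1 : int)%:~R.
  by rewrite intrM -Em rmorph_nat mulVf // pnatr_eq0.
move/intr_inj: E3; lia.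
Qed.

Lemma two_pi : exists s, RR s /\ 2 = pi * s.
Proof.
have [s [Rs E]] := two_dvd; exists (pi ^+ NN.-1 * s); split.
  by apply: RRM => //; apply: RRX; apply: RRpi.
by rewrite E mulrA -exprS prednK ?NN_gt0.
Qed.

Lemma pi_res x : RR x -> dvdR pi x \/ dvdR pi (x - 1).
Proof.
move=> [c [_ ->]].
pose t : int := \sum_(i < NN) c i.
pose r := \sum_(i < NN) (- \sum_(l < i) zz ^+ l) *~ c i.
have Rr : RR r.
  apply: Rp_sum => i _; apply: RpMz; apply: RpN; apply: Rp_sum => l _; apply: RR_zz.
have E : vec c - t%:~R = pi * r.
  rewrite /vec /t rmorph_sum -sumrB mulr_sumr; apply: eq_bigr => i _.
  rewrite /= -mulrzBl mulrzAr; congr (_ *~ _).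
  by rewrite mulrN -mulNr opprB -subrX1.
have [s [Rs Es]] := two_pi.
have d2 := divz_eq t 2; have m0 := @modz_ge0 t 2 isT; have m1 := @ltz_pmod t 2 isT.
set h := (t %/ 2)%Z in d2; set m := (t %% 2)%Z in d2 m0 m1.
have Rh : RR (h%:~R) by apply: RR_int.
have [m_eq0|m_eq1] : m = 0 \/ m = 1 by lia.
  left; exists (r + h%:~R * s); split; first by apply: RpD => //; apply: RRM.
  rewrite mulrDr -E mulrCA -Es mulrC.
  have -> : (t%:~R : algC) = 2 * h%:~R by rewrite {1}d2 m_eq0 addr0 intrM mulrC.
  by rewrite subrK.
right; exists (r + h%:~R * s); split; first by apply: RpD => //; apply: RRM.
rewrite mulrDr -E mulrCA -Es mulrC.
have -> : (t%:~R : algC) = 2 * h%:~R + 1 by rewrite {1}d2 m_eq1 intrD intrM mulrC.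
by ring.
Qed.

Definition cong1 x := dvdR pi (x - 1).

Lemma cong1_zz m : cong1 (zz ^+ m).
Proof.
have [r [Rr E]] := @geoR m _ (RR_zz 1); rewrite expr1 in E.
by exists (- r); split; [apply: RpN | rewrite mulrN -E opprB].
Qed.

Lemma cong1_N1 : cong1 (-1).
Proof.
have [s [Rs E]] := two_pi; exists (- s); split; first by apply: RpN.
by rewrite mulrN -E -opprD.
Qed.

Lemma cong1M x y : RR y -> cong1 x -> cong1 y -> cong1 (x * y).
Proof.
move=> Ry [r1 [R1 E1]] [r2 [R2 E2]]; exists (r1 * y + r2); split.
  by apply: RpD => //; apply: RRM.
have -> : x * y - 1 = (x - 1) * y + (y - 1) by ring.
by rewrite E1 E2; ring.
Qed.

Definition cz := - zz ^+ (NN * 2).-1.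

Lemma RRcz : RR cz. Proof. by apply: RpN; apply: RR_zz. Qed.

Lemma cong1_cz : cong1 cz.
Proof. by rewrite /cz -mulN1r; apply: cong1M; [apply: RR_zz | apply: cong1_N1 | apply: cong1_zz]. Qed.

Lemma cong1_czX a : cong1 (cz ^+ a).
Proof.
elim: a => [|a IHa]; first by exists 0; split; [apply: Rp0 | rewrite expr0 subrr mulr0].
by rewrite exprS; apply: cong1M => //; [apply: RRX; apply: RRcz | apply: cong1_cz].
Qed.

Lemma pi_conj : pi^* = pi * cz.
Proof.
rewrite /pi /cz rmorphB rmorph1 /= zz_conj mulrN mulrBl mul1r -exprS.
by rewrite prednK ?muln_gt0 ?NN_gt0 // zz2N opprB.
Qed.

Lemma cong1_conj x : cong1 x -> cong1 x^*.
Proof.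
move=> [r [Rr E]]; exists (cz * r^*); split; first by apply: RRM; [apply: RRcz | apply: RR_conj].
by rewrite -(rmorph1 Num.conj_op) -rmorphB E rmorphM /= pi_conj mulrA.
Qed.

Lemma pi_neq0 : pi != 0.
Proof.
apply/negP => /eqP; rewrite /pi => /eqP; rewrite subr_eq0 => /eqP /esym z1.
by have := zzN; rewrite z1 expr1n => /eqP; rewrite eq_sym (negbTE m1_neq1).
Qed.

Lemma key z y : RR z -> RR y -> z * z^* = 4 * y -> exists z', RR z' /\ z = 2 * z'.
Proof.
move=> Rz Ry Ezy.
suff H : forall d a u, (a + d = NN)%N -> RR u -> z = pi ^+ a * u ->
    exists z', RR z' /\ z = 2 * z'.
  by apply: (H NN 0%N z) => //; rewrite expr0 mul1r.
elim => [|d IH] a u ead Ru Ez.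
  have [q [Rq Eq]] := piN_dvd; exists (q * u); split; first by apply: RRM.
  by rewrite Ez -[a]addn0 ead Eq mulrA.
have [[u' [Ru' Eu']]|cu] := @pi_res u Ru.
  apply: (IH a.+1 u') => //; first by rewrite addSnnS.
  by rewrite Ez Eu' exprSr mulrA.
exfalso.
pose W := u * u^* * cz ^+ a.
have RW : RR W by apply: RRM; [apply: RRM => //; apply: RR_conj | apply: RRX; apply: RRcz].
have cW : cong1 W.
  apply: cong1M; first by apply: RRX; apply: RRcz.
    apply: cong1M => //; [apply: RR_conj | apply: cong1_conj] => //.
  exact: cong1_czX.
have [s [Rs Es]] := two_dvd.
have pa0 : pi ^+ a != 0 by apply: expf_neq0; apply: pi_neq0.
have EW : W = pi * (pi ^+ d * pi ^+ d.+1 * s ^+ 2 * y).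
  apply: (mulfI pa0); apply: (mulfI pa0).
  have E1 : z * z^* = pi ^+ a * (pi ^+ a * W).
    by rewrite Ez rmorphM rmorphXn /= pi_conj /W exprMn; ring.
  rewrite -E1 Ezy -ead in Es *.
  have -> : (4 : algC) = 2 * 2 by rewrite -natrM.
  rewrite Es exprD exprS; ring.
have [r1 [R1 E1]] := cW.
apply: pi_nunit; exists (pi ^+ d * pi ^+ d.+1 * s ^+ 2 * y - r1); split.
  apply: RpB => //; apply: RRM => //; apply: RRM; last by apply: RRX.
  by apply: RRM; apply: RRX; apply: RRpi.
by rewrite mulrBr -EW -E1 opprB addrC subrK.
Qed.

Lemma descent e z : RR z -> z * z^* = 2 ^+ (e.*2) ->
  exists w, RR w /\ z = 2 ^+ e * w /\ w * w^* = 1.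
Proof.
elim: e z => [|e IH] z Rz E; first by exists z; rewrite expr0 mul1r.
have R2 : RR (2 ^+ e.*2) by apply: RRX; apply: RR_nat.
have [z' [Rz' Ez']] : exists z', RR z' /\ z = 2 * z'.
  by apply: (@key z _ Rz R2); rewrite E doubleS !exprS mulrA -natrM.
have n4 : (4 : algC) != 0 by rewrite pnatr_eq0.
have E' : z' * z'^* = 2 ^+ e.*2.
  apply: (mulfI n4); move: E; rewrite Ez' rmorphM /= rmorph_nat doubleS !exprS => E.
  have -> : (4:algC) = 2 * 2 by rewrite -natrM.
  by rewrite -[RHS]mulrA -E; ring.
have [w [Rw [Ew ww]]] := IH z' Rz' E'.
by exists w; rewrite Ez' Ew exprS mulrA.
Qed.

Lemma vecD c d : vec (fun i => c i + d i) = vec c + vec d.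
Proof. by rewrite /vec -big_split; apply: eq_bigr => i _; rewrite mulrzDr. Qed.

Lemma Rp_disj (P Q : pred nat) x y : Rp P x -> Rp Q y -> x + y = 0 ->
  (forall i, P i -> Q i -> False) -> x = 0.
Proof.
move=> [c [Pc ->]] [d [Qd ->]] E PQ.
have Z := @vec_indep _ (etrans (vecD c d) E).
rewrite /vec big1 // => i _; suff -> : c i = 0 by rewrite mulr0z.
case Pi: (P i); last by apply: Pc; rewrite Pi.
have Qi : ~~ Q i by apply/negP => Qi; exact: (PQ i Pi Qi).
by have := Z i (ltn_ord i); rewrite (Qd i Qi) addr0.
Qed.

Lemma mod_neq0 i l : (i < NN)%N -> (l < NN)%N -> i != l ->
  ((i + (NN * 2).-1 * l) %% NN)%N != 0%N.
Proof.
move=> ltiN ltlN nil; apply/negP => /eqP H.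
have H1 : ((i + (NN * 2).-1 * l + l) %% NN = l)%N.
  by rewrite -modnDml H add0n modn_small.
have H2 : ((i + (NN * 2).-1 * l + l) %% NN = i)%N.
  rewrite -addnA -mulSnr prednK ?muln_gt0 ?NN_gt0 //.
  by rewrite addnC -mulnA [(NN * _)%N]mulnC modnMDl modn_small.
by move: nil; rewrite -H1 -{1}H2 eqxx.
Qed.

Lemma unit_parity w : RR w -> w * w^* = 1 ->
  Rp (fun i => ~~ odd i) w \/ Rp odd w.
Proof.
move=> [a [_ Ew]] E1.
pose G (i l : 'I_NN) := (zz ^+ i * (zz ^+ l)^*) *~ (a i * a l).
have Eww : w * w^* = (\sum_(i < NN) a i * a i)%:~R +
    \sum_(i < NN) \sum_(l < NN | l != i) G i l.
  rewrite Ew /vec rmorph_sum mulr_suml rmorph_sum -big_split; apply: eq_bigr => i _.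
  rewrite mulr_sumr (bigD1 i) //=; congr (_ + _).
    rewrite rmorphMz mulrzAl mulrzAr -mulrzA -normCK normrX norm_zz expr1n.
    by rewrite expr1n.
  by apply: eq_bigr => l _; rewrite /G rmorphMz mulrzAl mulrzAr -mulrzA (mulrC (a l)).
have RT : Rp (fun i => i != 0%N) (\sum_(i < NN) \sum_(l < NN | l != i) G i l).
  apply: Rp_sum => i _; apply: Rp_sum => l nli; apply: RpMz.
  rewrite /= rmorphXn /= zz_conj -exprM -exprD; apply: Rp_zz.
  by apply: mod_neq0 => //; rewrite eq_sym.
have R0 : Rp (pred1 0%N) ((\sum_(i < NN) a i * a i - 1)%:~R).
  by rewrite -[_%:~R]mulrzl mulr1 -(expr0 zz); apply: RpMz; apply: Rp_zz; rewrite mod0n.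
have := @Rp_disj _ _ _ _ R0 RT.
have H0 : (\sum_(i < NN) a i * a i - 1)%:~R + \sum_(i < NN) \sum_(l < NN | l != i) G i l = 0.
  by rewrite intrB addrAC -Eww E1 subrr.
have disj : forall i : nat, pred1 0%N i -> i != 0%N -> False by move=> i /= /eqP ->.
move=> /(_ H0 disj) /eqP.
rewrite intr_eq0 subr_eq0 => /eqP S1.
rewrite (bigID (fun i : 'I_NN => odd i)) /= in S1.
have ge0 : forall (Q : pred 'I_NN), 0 <= \sum_(i < NN | Q i) a i * a i.
  by move=> Q; apply: sumr_ge0 => i _; rewrite -expr2 sqr_ge0.
have [So|Se] : \sum_(i < NN | odd i) a i * a i = 0 \/
    \sum_(i < NN | ~~ odd i) a i * a i = 0.
  have /= h1 := ge0 (fun i => odd i); have /= h2 := ge0 (fun i => ~~ odd i). move: S1 h1 h2. set X := bigop _ _ _. set Y := bigop _ _ _. clear. lia.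
  left; exists (fun i => if odd i then 0 else a i); split; first by move=> i /negbNE ->.
  have nn : forall l : 'I_NN, odd l -> 0 <= a l * a l by move=> l _; rewrite -expr2 sqr_ge0.
  rewrite Ew /vec; apply: eq_bigr => i _; case: ifP => // oi.
  by have := psumr_eq0P nn So oi => /eqP; rewrite mulf_eq0 orbb => /eqP ->.
right; exists (fun i => if odd i then a i else 0); split; first by move=> i /negbTE ->.
have nn : forall l : 'I_NN, ~~ odd l -> 0 <= a l * a l by move=> l _; rewrite -expr2 sqr_ge0.
rewrite Ew /vec; apply: eq_bigr => i _; case: ifP => // /negbT oi.
by have := psumr_eq0P nn Se oi => /eqP; rewrite mulf_eq0 orbb => /eqP ->.
Qed.

Lemma Rp_RR P x : Rp P x -> RR x.
Proof. by move=> [c [_ ->]]; exists c. Qed.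

Lemma Rp_natM P m x : Rp P x -> Rp P (m%:R * x).
Proof. by move=> Rx; rewrite mulr_natl pmulrn; apply: RpMz. Qed.

Lemma odd_NN : odd NN = false. Proof. by rewrite /NN oddX. Qed.

Lemma Rp_term (b : bool) m : Rp (fun i => odd i == odd m) (zz ^+ m * (-1) ^+ b).
Proof.
have H : Rp (fun i => odd i == odd m) (zz ^+ m) by apply: Rp_zz; rewrite odd_mod ?odd_NN.
by case: b; rewrite ?expr1 ?expr0 ?mulr1 ?mulrN1 //; apply: RpN.
Qed.

Lemma regular e S0 S1 : Rp (fun i => ~~ odd i) S0 -> Rp odd (zz * S1) ->
  (S0 + zz * S1) * (S0 + zz * S1)^* = 2 ^+ (e.*2) -> S0 = 0 \/ S1 = 0.
Proof.
move=> R0 R1 E.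
have Rz : RR (S0 + zz * S1) by apply: RpD; [apply: Rp_RR R0 | apply: Rp_RR R1].
have [w [Rw [Ew ww1]]] := @descent e _ Rz E.
have E0 : S0 + zz * S1 - 2 ^+ e * w = 0 by rewrite Ew subrr.
rewrite -natrX in E0.
case: (@unit_parity w Rw ww1) => Pw.
  right; apply/eqP; rewrite -(mulrI_eq0 _ (mulfI zz_neq0)); apply/eqP.
  apply: (@Rp_disj odd (fun i => ~~ odd i) _ (S0 - (2 ^ e)%:R * w) R1).
  - by apply: RpB => //; apply: Rp_natM.
  - by rewrite addrC -addrA (addrC (- _)) addrA.
  - by move=> i ->.
left; apply: (@Rp_disj (fun i => ~~ odd i) odd _ (zz * S1 - (2 ^ e)%:R * w) R0).
- by apply: RpB => //; apply: Rp_natM.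
- by rewrite addrA.
- by move=> i /negbTE ->.
Qed.
End Cyc.

Lemma Rp_sub j (P Q : pred nat) x : (forall i, P i -> Q i) -> Rp j P x -> Rp j Q x.
Proof.
move=> PQ [c [Pc ->]]; exists c; split => // i nQ; apply: Pc.
by apply/negP => /PQ; apply/negP.
Qed.

Lemma normE (x r : algC) : 0 <= r -> (`|x| = r <-> x * x^* = r ^+ 2).
Proof.
move=> r0; split => [<-|E]; first by rewrite normCK.
by apply/eqP; rewrite -(eqrXn2 (n := 2)) ?normr_ge0 // normCK E.
Qed.

Lemma ii_to_i_alg (a b a' b' z z' R : algC) :
  (a + b) * (a' + b') = R -> (a - b) * (a' - b') = R ->
  (a' + b') * (a - b) = (a + b) * (a' - b') -> z * z' = 1 ->
  (a + z * b) * (a' + z' * b') = R.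
Proof.
move=> h1 h2 h3 hz.
have n2 : (2 : algC) != 0 by rewrite pnatr_eq0.
have eD : a * b' - a' * b = 0.
  apply/eqP; rewrite -(mulrI_eq0 _ (mulfI n2)); apply/eqP.
  have -> : 2 * (a * b' - a' * b) = (a' + b') * (a - b) - (a + b) * (a' - b') by ring.
  by rewrite h3 subrr.
have eS : a * b' + a' * b = 0.
  apply/eqP; rewrite -(mulrI_eq0 _ (mulfI n2)); apply/eqP.
  have -> : 2 * (a * b' + a' * b) = (a + b) * (a' + b') - (a - b) * (a' - b') by ring.
  by rewrite h1 h2 subrr.
have eX : a * b' = 0.
  apply/eqP; rewrite -(mulrI_eq0 _ (mulfI n2)); apply/eqP.
  have -> : 2 * (a * b') = (a * b' + a' * b) + (a * b' - a' * b) by ring.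
  by rewrite eS eD addr0.
have eY : a' * b = 0 by move: eS; rewrite eX add0r.
apply: (mulfI n2).
have -> : 2 * ((a + z * b) * (a' + z' * b')) = (a + b) * (a' + b') + (a - b) * (a' - b')
   + 2 * z' * (a * b') + 2 * z * (a' * b) + 2 * (z * z' - 1) * (b * b') by ring.
by rewrite h1 h2 eX eY hz subrr; ring.
Qed.

Lemma regL (a b z r : algC) : `|z| = 1 -> a = 0 \/ b = 0 -> `|a + z * b| = r ->
  (`|a + b| = r /\ `|a - b| = r) /\ 'Im ((a + b)^* * (a - b)) = 0.
Proof.
move=> nz [->|->] <-.
  rewrite !(add0r b) (add0r (z * b)) (sub0r b) normrM nz mul1r normrN.
  split => //; apply/Creal_ImP.
  by rewrite mulrN mulrC -normCK rpredN rpredX // normr_real.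
rewrite (addr0 a) (subr0 a) mulr0 (addr0 a); split => //; apply/Creal_ImP.
by rewrite mulrC -normCK rpredX // normr_real.
Qed.

Theorem mainTheorem14 (n k : nat) (hk : (2 <= k)%N)
  (g : BV n -> bool) (h : BV n -> 'I_(2 ^ k.-1))
  (f : BV n -> 'I_(2 ^ k)) (hg : BV n -> 'I_(2 ^ k.-1))
  (Hf : forall x, val (f x) = ((g x + 2 * h x) %% 2 ^ k)%N)
  (Hhg : forall x, val (hg x) = ((h x + 2 ^ (k - 2) * g x) %% 2 ^ k.-1)%N) :
  let cond_i := gbent f in
  let cond_ii := gbent h /\ gbent hg /\
      (forall u : BV n, 'Im ((WH h u)^* * WH hg u) = 0) in
  (~~ odd n -> (cond_i <-> cond_ii)) /\ (odd n -> cond_ii -> cond_i).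
Proof.
case: k hk h f hg Hf Hhg => [|[|j]] // _ h f hg Hf Hhg cond_i cond_ii.
pose e (u x : BV n) : algC := (-1) ^+ dotF2 u x.
pose P (u x : BV n) := ww j ^+ (h x) * e u x.
pose S0 (u : BV n) := \sum_x (if g x then 0 else P u x).
pose S1 (u : BV n) := \sum_x (if g x then P u x else 0).
have zzN2 : zz j ^+ (2 ^ j.+2) = 1 by rewrite expnSr; apply: zz2N.
have wwN2 : ww j ^+ (2 ^ j.+1) = 1 by rewrite expnS mulnC exprM wwN expr2 mulrNN mulr1.
have Hf' u : WH f u = S0 u + zz j * S1 u.
  rewrite /WH /S0 /S1 mulr_sumr -big_split; apply: eq_bigr => x _.
  change (zeta (2 ^ j.+2)) with (zz j).
  rewrite Hf expr_mod // exprD exprM -ww_zz /P.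
  by case: (g x); rewrite /= ?expr1 ?expr0 ?mul1r ?mulr0 ?addr0 ?add0r // mulrA.
have Hh' u : WH h u = S0 u + S1 u.
  rewrite /WH /S0 /S1 -big_split; apply: eq_bigr => x _.
  change (zeta (2 ^ j.+2.-1)) with (ww j).
  by rewrite /P; case: (g x); rewrite /= ?addr0 ?add0r.
have Hhg' u : WH hg u = S0 u - S1 u.
  rewrite /WH /S0 /S1 -sumrB; apply: eq_bigr => x _.
  change (zeta (2 ^ j.+2.-1)) with (ww j).
  rewrite Hhg expr_mod // exprD exprM (_ : (j.+2 - 2 = j)%N) ?wwN /P; last by rewrite !subSS subn0.
  by case: (g x); rewrite /= ?expr1 ?expr0 ?mulr1 ?subr0 ?sub0r // mulrN1 mulNr.
set r := sqrtC (2%:R ^+ n : algC).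
have r0 : 0 <= r by rewrite sqrtC_ge0 exprn_ge0 ?ler0n.
have r2 : r ^+ 2 = 2%:R ^+ n by rewrite sqrtCK.
have iii : cond_ii -> cond_i.
  move=> [Gh [Ghg Im0]] u; apply/normE => //.
  have := Gh u; have := Ghg u; have := Im0 u.
  rewrite Hf' Hh' Hhg' => /Creal_ImP; rewrite CrealE => /eqP.
  rewrite rmorphM /= conjCK => I0 /(@normE _ _ r0) E2 /(@normE _ _ r0) E1.
  rewrite rmorphD rmorphM /=.
  apply: ii_to_i_alg.
  - by rewrite -rmorphD.
  - by rewrite -rmorphB.
  - by rewrite -rmorphD -rmorphB mulrC I0 mulrC.
  - by rewrite -normCK norm_zz expr1n.
split => [ne|_]; last by [].
split => // Gf.
have reg u : S0 u = 0 \/ S1 u = 0.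
  apply: (@regular j n./2).
  - apply: Rp_sum => x _; case: (g x); first exact: Rp0.
    apply: (@Rp_sub j (fun i => odd i == odd (2 * h x)%N)).
      by move=> i /eqP ->; rewrite oddM.
    by rewrite /P ww_zz -exprM; apply: Rp_term.
  - rewrite mulr_sumr; apply: Rp_sum => x _; case: (g x); last by rewrite mulr0; exact: Rp0.
    apply: (@Rp_sub j (fun i => odd i == odd (2 * h x).+1)).
      by move=> i /eqP ->; rewrite /= oddM.
    by rewrite /P ww_zz -exprM mulrA -exprS; apply: Rp_term.
  - by rewrite even_halfK // -Hf' -normCK (Gf u) r2.
have G2 (u : BV n) : `|S0 u + zz j * S1 u| = r by rewrite -Hf' Gf.
have L (u : BV n) := @regL _ _ _ _ (norm_zz j) (reg u) (G2 u).
by split; [|split] => u; have [[L1 L2] L3] := L u; rewrite ?Hh' ?Hhg'.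
Qed.
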